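(* Let $(E,\|\cdot\|)$ be a normed space over $K$ and let $A$ be a local compactoid in $E$. If the linear span $[A]$ is infinite-dimensional, then $[A]$, with the norm restricted from $E$, is not a Banach space.
   Context: $K$ is a field complete with respect to a non-trivial non-archimedean absolute value, $B_K=\{x\in K:|x|\le1\}$; norms are non-archimedean. Absolutely convex = $B_K$-submodule; $[X]$ is the linear span of $X$. An absolutely convex $A\subseteq E$ is a local compactoid in $E$ if for every zero neighbourhood $U$ there is a finite $S\subseteq E$ with $A\subseteq U+[S]$. *)

(* Defs.v *)
From mathcomp Require Import all_boot all_order all_algebra.
From mathcomp Require Import reals.
Set Implicit Arguments. Unset Strict Implicit. Unset Printing Implicit Defensive.
Import Order.TTheory GRing.Theory Num.Theory.
Local Open Scope ring_scope.

Section NonArch.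
Variable R : realType.

Definition nonarch_abs (K : fieldType) (abs : K -> R) : Prop :=
  [/\ forall x, 0 <= abs x,
      forall x, abs x = 0 <-> x = 0,
      forall x y, abs (x * y) = abs x * abs y &
      forall x y, abs (x + y) <= Num.max (abs x) (abs y)].

Definition nontrivial_abs (K : fieldType) (abs : K -> R) : Prop :=
  exists x : K, abs x != 0 /\ abs x != 1.

Definition complete_abs (K : fieldType) (abs : K -> R) : Prop :=
  forall u : nat -> K,
    (forall e : R, 0 < e -> exists N : nat, forall m n : nat,
        (N <= m)%N -> (N <= n)%N -> abs (u m - u n) < e) ->
    exists l : K, forall e : R, 0 < e -> exists N : nat, forall n : nat,
        (N <= n)%N -> abs (u n - l) < e.

Variables (K : fieldType) (abs : K -> R) (E : lmodType K) (nrm : E -> R).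

Definition nonarch_norm : Prop :=
  [/\ forall x, 0 <= nrm x,
      forall x, nrm x = 0 <-> x = 0,
      forall (a : K) x, nrm (a *: x) = abs a * nrm x &
      forall x y, nrm (x + y) <= Num.max (nrm x) (nrm y)].

Definition lspan (X : E -> Prop) : E -> Prop :=
  fun x => exists (n : nat) (v : 'I_n -> E) (c : 'I_n -> K),
    (forall i, X (v i)) /\ x = \sum_(i < n) c i *: v i.

(** absolutely convex = B_K-submodule, B_K = {a | abs a <= 1} *)
Definition abs_convex (A : E -> Prop) : Prop :=
  [/\ A 0,
      forall x y, A x -> A y -> A (x + y) &
      forall (a : K) x, abs a <= 1 -> A x -> A (a *: x)].

Definition zero_nbhd (U : E -> Prop) : Prop :=
  exists e : R, 0 < e /\ forall x, nrm x < e -> U x.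

Definition finite_set (S : E -> Prop) : Prop :=
  exists s : seq E, forall x, S x <-> x \in s.

Definition local_compactoid (A : E -> Prop) : Prop :=
  abs_convex A /\
  forall U, zero_nbhd U -> exists S, finite_set S /\
    forall a, A a -> exists u y, U u /\ lspan S y /\ a = u + y.

Definition finite_dim (V : E -> Prop) : Prop :=
  exists S, finite_set S /\ forall x, V x -> lspan S x.

Definition banach_subspace (V : E -> Prop) : Prop :=
  forall u : nat -> E, (forall n, V (u n)) ->
    (forall e : R, 0 < e -> exists N : nat, forall m n : nat,
        (N <= m)%N -> (N <= n)%N -> nrm (u m - u n) < e) ->
    exists l : E, V l /\ forall e : R, 0 < e -> exists N : nat, forall n : nat,
        (N <= n)%N -> nrm (u n - l) < e.

End NonArch.

(* Main.v *)
Require Import Defs.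
From mathcomp Require Import all_boot all_order all_algebra.
From mathcomp Require Import boolp reals ring lra.
Set Implicit Arguments. Unset Strict Implicit. Unset Printing Implicit Defensive.
Import Order.TTheory GRing.Theory Num.Theory.
Local Open Scope ring_scope.
Section Span.
Variables (K : fieldType) (E : lmodType K).

Fixpoint comb (e : seq E) (c : nat -> K) : E :=
  match e with [::] => 0 | x :: e' => c 0%N *: x + comb e' (fun i => c i.+1) end.
Definition spanS (e : seq E) (x : E) := exists c, x = comb e c.

Lemma combD e c d : comb e c + comb e d = comb e (fun i => c i + d i).
Proof.
elim: e c d => [|x e IH] c d /=; first by rewrite addr0.
by rewrite -IH scalerDl addrACA.
Qed.
Lemma combZ e a c : a *: comb e c = comb e (fun i => a * c i).
Proof.
elim: e c => [|x e IH] c /=; first by rewrite scaler0.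
by rewrite scalerDr IH scalerA.
Qed.
Lemma comb0 e : comb e (fun _ => 0) = 0.
Proof. elim: e => [|x e IH] //=; by rewrite IH scale0r addr0. Qed.
Lemma combB e c d : comb e c - comb e d = comb e (fun i => c i - d i).
Proof.
rewrite -scaleN1r combZ combD; congr comb; apply: funext => i; by rewrite mulN1r.
Qed.

Lemma spanS0 e : spanS e 0. Proof. by exists (fun _ => 0); rewrite comb0. Qed.
Lemma spanSD e x y : spanS e x -> spanS e y -> spanS e (x + y).
Proof. by move=> [c ->] [d ->]; exists (fun i => c i + d i); rewrite combD. Qed.
Lemma spanSZ e a x : spanS e x -> spanS e (a *: x).
Proof. by move=> [c ->]; exists (fun i => a * c i); rewrite combZ. Qed.
Lemma spanSN e x : spanS e x -> spanS e (- x).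
Proof. by move=> h; rewrite -scaleN1r; apply: spanSZ. Qed.
Lemma spanSB e x y : spanS e x -> spanS e y -> spanS e (x - y).
Proof. by move=> h1 h2; apply: spanSD => //; apply: spanSN. Qed.
Lemma spanS_cons x e z : spanS (x :: e) z <-> exists a y, spanS e y /\ z = a *: x + y.
Proof.
split; first by move=> [c ->]; exists (c 0%N), (comb e (fun i => c i.+1)); split => //; eexists.
move=> [a [y [[c ->] ->]]]; exists (fun i => if i is j.+1 then c j else a) => /=.
by congr (_ + comb _ _); apply: funext.
Qed.
Lemma spanS_consr x e z : spanS e z -> spanS (x :: e) z.
Proof. move=> h; apply/spanS_cons; exists 0, z; by rewrite scale0r add0r. Qed.
Lemma spanS_mem e x : x \in e -> spanS e x.
Proof.
elim: e => [|y e IH] //; rewrite in_cons => /orP [/eqP ->|/IH h].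
  apply/spanS_cons; exists 1, 0; by rewrite scale1r addr0; split => //; apply: spanS0.
exact: spanS_consr.
Qed.

Lemma lspan0 (X : E -> Prop) : lspan X 0.
Proof. exists 0%N, (fun _ => 0), (fun _ => 0); split; [by case | by rewrite big_ord0]. Qed.
Lemma lspan_mem (X : E -> Prop) x : X x -> lspan X x.
Proof. move=> h; exists 1%N, (fun _ => x), (fun _ => 1); split => //; by rewrite big_ord1 scale1r. Qed.
Lemma lspanZ (X : E -> Prop) a x : lspan X x -> lspan X (a *: x).
Proof.
move=> [n [v [c [hv ->]]]]; exists n, v, (fun i => a * c i); split => //.
rewrite scaler_sumr; apply: eq_bigr => i _; by rewrite scalerA.
Qed.
Lemma lspanD (X : E -> Prop) x y : lspan X x -> lspan X y -> lspan X (x + y).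
Proof.
move=> [n [v [c [hv ->]]]] [m [w [d [hw ->]]]].
exists (n + m)%N, (fun i => match split i with inl j => v j | inr j => w j end).
exists (fun i => match split i with inl j => c j | inr j => d j end); split.
  by move=> i; case: (split i).
rewrite big_split_ord /=; congr (_ + _); apply: eq_bigr => i _.
  by have := unsplitK (inl i : 'I_n + 'I_m) => /= ->.
by have := unsplitK (inr i : 'I_n + 'I_m) => /= ->.
Qed.
Lemma lspanN (X : E -> Prop) x : lspan X x -> lspan X (- x).
Proof. by move=> h; rewrite -scaleN1r; apply: lspanZ. Qed.
Lemma lspanB (X : E -> Prop) x y : lspan X x -> lspan X y -> lspan X (x - y).
Proof. by move=> h1 h2; apply: lspanD => //; apply: lspanN. Qed.

Lemma lspan_spanS (X : E -> Prop) e : (forall x, X x -> x \in e) ->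
  forall x, lspan X x -> spanS e x.
Proof.
move=> hX x [n [v [c [hv ->]]]].
apply: (big_ind (spanS e)); [exact: spanS0 | exact: spanSD |].
move=> i _; apply: spanSZ; apply: spanS_mem; exact: hX.
Qed.
Lemma spanS_lspan (X : E -> Prop) e : (forall x, x \in e -> X x) ->
  forall x, spanS e x -> lspan X x.
Proof.
elim: e => [|y e IH] hX x.
  by move=> [c ->]; apply: lspan0.
move/spanS_cons => [a [z [hz ->]]]; apply: lspanD.
  apply: lspanZ; apply: lspan_mem; apply: hX; exact: mem_head.
apply: IH => // w hw; apply: hX; by rewrite in_cons hw orbT.
Qed.
Lemma rearr2 (c w p q : E) : w - (p - q) = (c + w - p) - (c - q).
Proof. by rewrite !opprB [c + w]addrC -!addrA [c + _]addrCA [c + (q - c)]addrCA subrr addr0 [- p + q]addrC. Qed.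
Lemma rearr3 (w p y : E) : w = (w - (p + y)) + p + y.
Proof. by rewrite -addrA subrK. Qed.
Lemma spanS_lspan2 (X : E -> Prop) e : (forall x, x \in e -> lspan X x) ->
  forall x, spanS e x -> lspan X x.
Proof.
elim: e => [|y e IH] hX x.
  by move=> [c ->]; apply: lspan0.
move/spanS_cons => [a [z [hz ->]]]; apply: lspanD.
  apply: lspanZ; apply: hX; exact: mem_head.
apply: IH => // w hw; apply: hX; by rewrite in_cons hw orbT.
Qed.
End Span.

Section Reals.
Variable R : realType.
Lemma bern (q : R) n : 1 <= q -> 1 + n%:R * (q - 1) <= q ^+ n.
Proof.
move=> hq; elim: n => [|n IH]; first by rewrite mul0r addr0 expr0.
rewrite exprS -natr1.
have ht : 0 <= (n%:R : R) by apply: ler0n.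
set t := n%:R in IH ht *.
have hq1 : 0 <= q - 1 by lra.
have h1 : 0 <= t * (q - 1) * (q - 1) by apply: mulr_ge0 => //; apply: mulr_ge0.
have h2 : q * (1 + t * (q - 1)) <= q * q ^+ n by apply: ler_wpM2l => //; lra.
apply: le_trans h2.
have -> : q * (1 + t * (q - 1)) = 1 + (t + 1) * (q - 1) + t * (q - 1) * (q - 1) by ring.
lra.
Qed.
Lemma pow_unb (q : R) : 1 < q -> forall M, exists n, forall m, (n <= m)%N -> M < q ^+ m.
Proof.
move=> hq M; have hq1 : 0 < q - 1 by lra.
have h0 : 0 <= `|M| / (q - 1) by apply: divr_ge0; [exact: normr_ge0 | exact: ltW].
have hb := archi_boundP h0.
exists (Num.bound (`|M| / (q - 1))) => m hm.
have hm' : ((Num.bound (`|M| / (q - 1)))%:R : R) <= m%:R by rewrite ler_nat.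
have h1 : `|M| < m%:R * (q - 1).
  by rewrite -ltr_pdivrMr //; apply: lt_le_trans hb hm'.
have h2 := bern m (ltW hq).
have h3 : M <= `|M| by apply: ler_norm.
lra.
Qed.
Lemma geo_small (q : R) : 1 < q -> forall e, 0 < e -> exists n, forall m, (n <= m)%N -> (q ^+ m)^-1 < e.
Proof.
move=> hq e he; have [n hn] := pow_unb hq e^-1; exists n => m hm.
have hp : 0 < q ^+ m by apply: exprn_gt0; lra.
rewrite -[e]invrK ltf_pV2 ?posrE ?invr_gt0 //; exact: hn.
Qed.
End Reals.
Section Main.
Variables (R : realType) (K : fieldType) (abs : K -> R) (E : lmodType K) (nrm : E -> R).
Hypothesis habs : nonarch_abs abs.
Hypothesis hnrm : nonarch_norm abs nrm.
Hypothesis hcomp : complete_abs abs.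

Lemma abs_ge0 x : 0 <= abs x. Proof. by case: habs. Qed.
Lemma abs_eq0 x : abs x = 0 <-> x = 0. Proof. by case: habs. Qed.
Lemma absM x y : abs (x * y) = abs x * abs y. Proof. by case: habs. Qed.
Lemma absD x y : abs (x + y) <= Num.max (abs x) (abs y). Proof. by case: habs. Qed.
Lemma abs0 : abs 0 = 0. Proof. exact/abs_eq0. Qed.
Lemma abs1 : abs 1 = 1.
Proof.
have h := absM 1 1; rewrite mulr1 in h.
have hn : abs 1 != 0 by apply/eqP => /abs_eq0 /eqP; rewrite oner_eq0.
by apply: (mulfI hn); rewrite -h mulr1.
Qed.
Lemma absN1 : abs (-1) = 1.
Proof.
have h := absM (-1) (-1); rewrite mulrNN mulr1 abs1 in h.
have h0 := abs_ge0 (-1).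
have : (abs (-1) - 1) * (abs (-1) + 1) = 0 by rewrite -subr_sqr expr1n expr2 -h subrr.
move/eqP; rewrite mulf_eq0 => /orP [/eqP|/eqP]; first by move/eqP; rewrite subr_eq0 => /eqP.
move=> h1; have : 0 < abs (-1) + 1 by rewrite ltr_wpDl.
by rewrite h1 ltxx.
Qed.
Lemma absN x : abs (- x) = abs x.
Proof. by rewrite -mulN1r absM absN1 mul1r. Qed.
Lemma absB x y : abs (x - y) = abs (y - x).
Proof. by rewrite -absN opprB. Qed.
Lemma absV x : x != 0 -> abs x^-1 = (abs x)^-1.
Proof.
move=> hx; have h := absM x x^-1; rewrite mulfV // abs1 in h.
have hn : abs x != 0 by apply/eqP => /abs_eq0 /eqP; rewrite (negbTE hx).
by apply: (mulfI hn); rewrite -h mulfV.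
Qed.
Lemma absX x n : abs (x ^+ n) = abs x ^+ n.
Proof. elim: n => [|n IH]; first by rewrite !expr0 abs1. by rewrite !exprS absM IH. Qed.
Lemma abs_gt0 x : x != 0 -> 0 < abs x.
Proof.
move=> hx; rewrite lt_def abs_ge0 andbT; apply/eqP => /abs_eq0 /eqP; by rewrite (negbTE hx).
Qed.

Lemma nrm_ge0 x : 0 <= nrm x. Proof. by case: hnrm. Qed.
Lemma nrm_eq0 x : nrm x = 0 <-> x = 0. Proof. by case: hnrm. Qed.
Lemma nrmZ a x : nrm (a *: x) = abs a * nrm x. Proof. by case: hnrm. Qed.
Lemma nrmD x y : nrm (x + y) <= Num.max (nrm x) (nrm y). Proof. by case: hnrm. Qed.
Lemma nrm0 : nrm 0 = 0. Proof. exact/nrm_eq0. Qed.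
Lemma nrmN x : nrm (- x) = nrm x.
Proof. by rewrite -scaleN1r nrmZ absN1 mul1r. Qed.
Lemma nrmB x y : nrm (x - y) = nrm (y - x).
Proof. by rewrite -nrmN opprB. Qed.
Lemma nrmD_lt x y e : nrm x < e -> nrm y < e -> nrm (x + y) < e.
Proof. move=> h1 h2; apply: le_lt_trans (nrmD x y) _; by rewrite gt_max h1 h2. Qed.
Lemma nrmD_le x y e : nrm x <= e -> nrm y <= e -> nrm (x + y) <= e.
Proof. move=> h1 h2; apply: le_trans (nrmD x y) _; by rewrite ge_max h1 h2. Qed.
Lemma nrmB_lt x y e : nrm x < e -> nrm y < e -> nrm (x - y) < e.
Proof. by move=> h1 h2; apply: nrmD_lt; rewrite ?nrmN. Qed.
Lemma absD_lt x y e : abs x < e -> abs y < e -> abs (x + y) < e.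
Proof. move=> h1 h2; apply: le_lt_trans (absD x y) _; by rewrite gt_max h1 h2. Qed.
Lemma absB_lt x y e : abs x < e -> abs y < e -> abs (x - y) < e.
Proof. by move=> h1 h2; apply: absD_lt; rewrite ?absN. Qed.
Lemma absD_le x y e : abs x <= e -> abs y <= e -> abs (x + y) <= e.
Proof. move=> h1 h2; apply: le_trans (absD x y) _; by rewrite ge_max h1 h2. Qed.


Lemma nrm_small0 x : (forall d, 0 < d -> nrm x < d) -> x = 0.
Proof.
move=> H; apply/nrm_eq0; case: (lerP (nrm x) 0) => h.
  by apply/eqP; rewrite eq_le h nrm_ge0.
by have := H _ h; rewrite ltxx.
Qed.

Definition closedS b := forall x, (forall d, 0 < d -> exists y, spanS b y /\ nrm (x - y) < d) -> spanS b x.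
Definition boundS b := exists C, 0 < C /\ forall c i, (i < size b)%N -> abs (c i) <= C * nrm (comb b c).

Lemma two_gt1 : 1 < (2 : R). Proof. lra. Qed.

Lemma basis s : exists b, (forall x, spanS s x <-> spanS b x) /\ boundS b /\ closedS b.
Proof.
elim: s => [|x s IH].
  exists [::]; split => //; split; first by exists 1; split => // c i.
  move=> y H; have -> : y = 0.
    apply: nrm_small0 => d hd; have [z [[c hz] hyz]] := H d hd.
    by move: hyz; rewrite hz /= subr0.
  exact: spanS0.
case: IH => b' [heq [[C' [hC' hb']] hcl]].
case: (pselect (spanS b' x)) => hx.
  exists b'; split; last by split; [exists C'; split | exact: hcl].
  move=> z; split.
    move/spanS_cons => [a [y [hy ->]]]; apply: spanSD; first exact: spanSZ.
    exact/heq.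
  by move/heq => h; apply: spanS_consr.
have [eta [heta hfar]] : exists eta, 0 < eta /\ forall y, spanS b' y -> eta <= nrm (x - y).
  case: (pselect (exists eta, 0 < eta /\ forall y, spanS b' y -> eta <= nrm (x - y))) => // hne.
  exfalso; apply: hx; apply: hcl => d hd.
  case: (pselect (exists y, spanS b' y /\ nrm (x - y) < d)) => // hn.
  exfalso; apply: hne; exists d; split => // y hy; rewrite leNgt; apply/negP => hlt.
  by apply: hn; exists y.
have claim : forall a y, spanS b' y -> abs a * eta <= nrm (a *: x + y).
  move=> a y hy; case: (eqVneq a 0) => [->|ha]; first by rewrite abs0 mul0r nrm_ge0.
  have -> : a *: x + y = a *: (x - (- (a^-1 *: y))).
    by rewrite opprK scalerDr scalerA mulfV // scale1r.
  rewrite nrmZ; apply: ler_wpM2l; first exact: abs_ge0.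
  by apply: hfar; apply: spanSN; apply: spanSZ.
exists (x :: b'); split.
  move=> z; split; move/spanS_cons => [a [y [hy ->]]]; apply/spanS_cons; exists a, y; split => //.
    exact/heq.
  exact/heq.
have hbound : boundS (x :: b').
  have pe : 0 < eta^-1 by rewrite invr_gt0.
  have pw : 0 <= nrm x / eta by apply: divr_ge0; [exact: nrm_ge0 | exact: ltW].
  set w := nrm x / eta in pw *.
  have p2 : 0 <= C' * (1 + w) by apply: mulr_ge0; lra.
  exists (eta^-1 + C' * (1 + w)); split; first lra.
  move=> c i hi; set z := comb (x :: b') c.
  have hz : z = c 0%N *: x + comb b' (fun i => c i.+1) by [].
  have hu : 0 <= nrm z by exact: nrm_ge0.
  have h0 : abs (c 0%N) <= nrm z / eta.
    by rewrite ler_pdivlMr //; rewrite hz; apply: claim; eexists.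
  case: i hi => [|j] hj.
    apply: le_trans h0 _; rewrite mulrC; apply: ler_wpM2r => //; lra.
  have hy : nrm (comb b' (fun i => c i.+1)) <= (1 + w) * nrm z.
    have -> : comb b' (fun i => c i.+1) = z - c 0%N *: x by rewrite hz addrAC subrr add0r.
    apply: nrmD_le; first by nra.
    rewrite nrmN nrmZ.
    have h1 : abs (c 0%N) * nrm x <= nrm z / eta * nrm x by apply: ler_wpM2r; [exact: nrm_ge0 | exact: h0].
    have e1 : nrm z / eta * nrm x = w * nrm z by rewrite /w; ring.
    rewrite e1 in h1.
    nra.
  have := hb' (fun i => c i.+1) j hj => /= h2.
  apply: le_trans h2 _.
  have h3 : C' * nrm (comb b' (fun i => c i.+1)) <= C' * ((1 + w) * nrm z) by apply: ler_wpM2l => //; lra.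
  apply: le_trans h3 _; rewrite mulrA mulrDl; apply: ler_wpDl => //.
  by apply: mulr_ge0 => //; exact: ltW.
split; first exact: hbound.
have [C [hC hb]] := hbound.
move=> y0 H.
have hk : forall k : nat, exists c : nat -> K, nrm (y0 - comb (x :: b') c) < (2 ^+ k)^-1.
  move=> k; have hp : 0 < (2 ^+ k : R)^-1 by rewrite invr_gt0 exprn_gt0.
  by have [y [[c ->] hy]] := H _ hp; exists c.
have [cc hcc] := choice hk.
have hcauchy : forall e : R, 0 < e -> exists N : nat, forall m n : nat,
    (N <= m)%N -> (N <= n)%N -> abs (cc m 0%N - cc n 0%N) < e.
  move=> e he; have heC : 0 < e / C by apply: divr_gt0.
  have [N hN] := geo_small two_gt1 heC; exists N => m n hm hn.
  have h1 := hb (fun i => cc m i - cc n i) 0%N (ltn0Sn _).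
  rewrite -combB /= in h1; apply: le_lt_trans h1 _.
  rewrite -ltr_pdivlMl // mulrC.
  have -> : comb (x :: b') (cc m) - comb (x :: b') (cc n) =
     (y0 - comb (x :: b') (cc n)) - (y0 - comb (x :: b') (cc m)).
    by rewrite opprB [RHS]addrC [RHS]addrA subrK.
  apply: nrmB_lt; [apply: lt_trans (hcc n) (hN n hn) | apply: lt_trans (hcc m) (hN m hm)].
have [l hl] := hcomp hcauchy.
have hcl' : spanS b' (y0 - l *: x).
  apply: hcl => d hd.
  have hxd : 0 < d / (nrm x + 1) by apply: divr_gt0 => //; have := nrm_ge0 x; lra.
  have [N1 hN1] := hl _ hxd.
  have [N2 hN2] := geo_small two_gt1 hd.
  set k := maxn N1 N2.
  exists (comb b' (fun i => cc k i.+1)); split; first by eexists.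
  have -> : y0 - l *: x - comb b' (fun i => cc k i.+1) =
     (y0 - comb (x :: b') (cc k)) + (cc k 0%N - l) *: x.
    rewrite /= scalerBl; set u := cc k 0%N *: x; set v := comb _ _.
    rewrite opprD !addrA [y0 - u - v + u]addrAC subrK [LHS]addrAC.
    done.
  apply: nrmD_lt; first by apply: lt_trans (hcc k) (hN2 k (leq_maxr _ _)).
  rewrite nrmZ.
  have ha := hN1 k (leq_maxl _ _).
  have hnx := nrm_ge0 x; have hab := abs_ge0 (cc k 0%N - l).
  rewrite ltr_pdivlMr in ha; last lra.
  nra.
apply/spanS_cons; exists l, (y0 - l *: x); split => //.
by rewrite addrC addrNK.
Qed.

Lemma rearr (u p C v q : E) : u + (p + C) - (v + (p + q)) = (u - v) + (C - q).
Proof. by rewrite !opprD addrACA [(p + C) + _]addrACA subrr add0r. Qed.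

Lemma transfer (F : E -> Prop) (hF : forall x y b, F x -> F y -> F (x - b *: y))
  (t : R) (ht0 : 0 < t) (ht1 : t < 1) :
  forall e (X : E -> Prop) eps M, (forall x, X x -> F x) ->
  (forall x, X x -> exists u c, nrm u < eps /\ (forall i, (i < size e)%N -> abs (c i) <= M)
      /\ x = u + comb e c) ->
  exists T : seq E, (forall y, y \in T -> F y) /\
   forall x, X x -> exists u y, nrm u < eps / t ^+ size e /\ spanS T y /\ x = u + y.
Proof.
have htp : forall n, 0 < t ^+ n by move=> n; apply: exprn_gt0.
elim=> [|e0 e IH] X eps M hXF hX.
  exists [::]; split => // x hx; have [u [c [hu [_ ->]]]] := hX x hx.
  by exists u, 0; rewrite expr0 divr1 addr0; split => //; split => //; apply: spanS0.
set rep := fun x u (c : nat -> K) => X x /\ nrm u < eps /\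
   (forall i, (i < size (e0 :: e))%N -> abs (c i) <= M) /\ x = u + comb (e0 :: e) c.
have hrep : forall x, X x -> exists u c, rep x u c.
  move=> x hx; have [u [c [h1 [h2 h3]]]] := hX x hx; by exists u, c.
have hle : 0 <= eps -> eps / t ^+ size e <= eps / t ^+ (size e).+1.
  move=> he; apply: ler_wpM2l => //; rewrite lef_pV2 ?posrE // exprS.
  rewrite -{2}[t ^+ size e]mul1r; apply: ler_wpM2r; [exact: ltW (htp _) | exact: ltW].
case: (pselect (exists x u c, rep x u c /\ eps <= abs (c 0%N) * nrm e0)) => hcase; last first.
  have hX' : forall x, X x -> exists u c, nrm u < eps /\ (forall i, (i < size e)%N -> abs (c i) <= M)
      /\ x = u + comb e c.
    move=> x hx; have [u [c [_ [hu [hc hxe]]]]] := hrep x hx.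
    exists (u + c 0%N *: e0), (fun i => c i.+1); split; last split.
    - apply: nrmD_lt => //; rewrite nrmZ ltNge; apply/negP => hge.
      by apply: hcase; exists x, u, c.
    - by move=> i hi; apply: hc.
    - by rewrite hxe /= addrA.
  have [T [hT hT2]] := IH X eps M hXF hX'.
  exists T; split => // x hx; have [u [y [hu [hy ->]]]] := hT2 x hx.
  have [u0 [c0 [_ [hu0 _]]]] := hrep x hx.
  have he : 0 <= eps by apply: ltW; apply: le_lt_trans (nrm_ge0 u0) hu0.
  by exists u, y; split => //; apply: lt_le_trans hu (hle he).
case: hcase => x1 [u1 [c1 [r1 hge]]].
have heps : 0 < eps.
  by case: r1 => _ [h _]; apply: le_lt_trans (nrm_ge0 u1) h.
have hM : 0 <= M.
  by case: r1 => _ [_ [h _]]; apply: le_trans (abs_ge0 (c1 0%N)) (h 0%N (ltn0Sn _)).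
pose V : R -> Prop := fun r => exists x u c, rep x u c /\ r = abs (c 0%N).
have hsup : classical_sets.has_sup V.
  split; first by exists (abs (c1 0%N)); exists x1, u1, c1.
  exists M => r [x [u [c [[_ [_ [hc _]]] ->]]]]; exact: hc 0%N (ltn0Sn _).
have hs1 : abs (c1 0%N) <= sup V.
  by apply: sup_upper_bound => //; exists x1, u1, c1.
have hpos : 0 < abs (c1 0%N).
  case: (lerP (abs (c1 0%N)) 0) => // h.
  have h0 : abs (c1 0%N) = 0 by apply/eqP; rewrite eq_le h abs_ge0.
  by move: hge; rewrite h0 mul0r => /(lt_le_trans heps); rewrite ltxx.
set sg := sup V in hs1.
have hsg : 0 < sg by apply: lt_le_trans hpos hs1.
have hd : 0 < (1 - t) * sg by apply: mulr_gt0 => //; lra.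
have [r [a [ua [ca [ra ->]]]] hr] := sup_adherent hd hsup.
rewrite -/sg in hr.
have hca : t * sg < abs (ca 0%N) by move: hr; have -> : sg - (1 - t) * sg = t * sg by ring.
have hcap : 0 < abs (ca 0%N) by apply: lt_trans hca; apply: mulr_gt0.
have hca0 : ca 0%N != 0 by apply/eqP => h; move: hcap; rewrite h abs0 ltxx.
have hsgt : sg <= abs (ca 0%N) / t by rewrite ler_pdivlMr // mulrC; apply: ltW.
have hbeta : forall x u c, rep x u c -> abs (c 0%N / ca 0%N) <= t^-1.
  move=> x u c hrc.
  have hc0 : abs (c 0%N) <= sg by apply: sup_upper_bound => //; exists x, u, c; split.
  rewrite absM (absV hca0) ler_pdivrMr // mulrC.
  exact: le_trans hc0 hsgt.
have hti : 1 <= t^-1 by rewrite invf_ge1 //; apply: ltW.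
have hti0 : 0 < t^-1 by rewrite invr_gt0.
pose X1 := fun z => exists x u c, rep x u c /\ z = x - (c 0%N / ca 0%N) *: a.
have hX1F : forall z, X1 z -> F z.
  move=> z [x [u [c [[hx _] ->]]]]; apply: hF; apply: hXF => //; by case: ra.
have hX1 : forall z, X1 z -> exists u c, nrm u < eps / t /\
     (forall i, (i < size e)%N -> abs (c i) <= M / t) /\ z = u + comb e c.
  move=> z [x [u [c [hrc ->]]]]; have hb := hbeta x u c hrc.
  set b := c 0%N / ca 0%N in hb *.
  case: hrc => _ [hu [hc hx]]; case: ra => _ [hua [hca' ha]].
  exists (u - b *: ua), (fun i => c i.+1 - b * ca i.+1); split; last split.
  - apply: nrmB_lt.
      apply: lt_le_trans hu _; rewrite -[X in X <= _]mulr1; apply: ler_wpM2l => //; exact: ltW.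
    rewrite nrmZ mulrC.
    have h1 : nrm ua * abs b <= nrm ua * t^-1 by apply: ler_wpM2l => //; exact: nrm_ge0.
    by apply: le_lt_trans h1 _; rewrite ltr_pM2r.
  - move=> i hi; apply: absD_le; rewrite ?absN.
      apply: le_trans (hc i.+1 hi) _; rewrite -[X in X <= _]mulr1; by apply: ler_wpM2l.
    rewrite absM mulrC; apply: ler_pM; [exact: abs_ge0 | exact: abs_ge0 | exact: hca' i.+1 hi | done].
  - have hcomb : comb e (fun i => c i.+1 - b * ca i.+1) =
        comb e (fun i => c i.+1) - b *: comb e (fun i => ca i.+1) by rewrite combZ combB.
    rewrite hx ha /= hcomb.
    have hbc : b * ca 0%N = c 0%N by rewrite /b divfK.
    rewrite !scalerDr scalerA hbc; apply: rearr.
have [T [hT hT2]] := IH X1 (eps / t) (M / t) hX1F hX1.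
exists (a :: T); split.
  move=> y; rewrite in_cons => /orP [/eqP ->|/hT //]; apply: hXF; by case: ra.
move=> x hx; have [u [c hrc]] := hrep x hx.
have hz : X1 (x - (c 0%N / ca 0%N) *: a) by exists x, u, c.
have [u' [y' [hu' [hy' he']]]] := hT2 _ hz.
exists u', ((c 0%N / ca 0%N) *: a + y'); split; last split.
- by move: hu'; rewrite exprS invfM mulrA.
- by apply/spanS_cons; exists (c 0%N / ca 0%N), y'.
- by rewrite addrCA -he' addrC subrK.
Qed.

Lemma exists_big : nontrivial_abs abs -> exists lam : K, 1 < abs lam.
Proof.
move=> [x [h0 h1]].
have hx : x != 0 by apply/eqP => hx; move: h0; rewrite hx abs0 eqxx.
have hp : 0 < abs x by apply: abs_gt0.
case: (ltrgtP (abs x) 1) => h; last by move: h1; rewrite h eqxx.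
  by exists x^-1; rewrite absV // invf_gt1.
by exists x.
Qed.

Variable (A : E -> Prop) (lam : K).
Hypothesis hA : abs_convex abs A.
Hypothesis hlam : 1 < abs lam.

Lemma lam_neq0 : lam != 0.
Proof. apply/eqP => h; have := hlam; by rewrite h abs0 ltNge ler01. Qed.

Lemma abs_lamV k : abs (lam^-1 ^+ k) = (abs lam ^+ k)^-1.
Proof. by rewrite absX (absV lam_neq0) exprVn. Qed.

Lemma lamVK k : lam ^+ k * lam^-1 ^+ k = 1.
Proof. by rewrite -exprMn mulfV ?lam_neq0 // expr1n. Qed.

Lemma A0 : A 0. Proof. by case: hA. Qed.
Lemma AD x y : A x -> A y -> A (x + y). Proof. by case: hA => _ h _; apply: h. Qed.
Lemma AZ a x : abs a <= 1 -> A x -> A (a *: x). Proof. by case: hA => _ _ h; apply: h. Qed.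
Lemma AB x y : A x -> A y -> A (x - y).
Proof. move=> h1 h2; apply: AD => //; rewrite -scaleN1r; apply: AZ => //; by rewrite absN1. Qed.

Lemma liftA N M a : (N <= M)%N -> A a -> exists a', A a' /\ lam ^+ N *: a = lam ^+ M *: a'.
Proof.
move=> hNM ha; have [k ->] : exists k, M = (N + k)%N by exists (M - N)%N; rewrite subnKC.
exists (lam^-1 ^+ k *: a); split.
  apply: AZ => //; rewrite abs_lamV invf_le1; first by apply: exprn_ege1; apply: ltW.
  by apply: exprn_gt0; apply: lt_trans ltr01 hlam.
by rewrite scalerA exprD -mulrA lamVK mulr1.
Qed.

Lemma cover x : lspan A x -> exists N a, A a /\ x = lam ^+ N *: a.
Proof.
move=> [n [v [c [hv ->]]]].
apply: (big_ind (fun x => exists N a, A a /\ x = lam ^+ N *: a)).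
- by exists 0%N, 0; split; [exact: A0 | rewrite scaler0].
- move=> x1 y1 [N [a [ha ->]]] [M [b [hb ->]]].
  have [a' [ha' ->]] := liftA (leq_maxl N M) ha.
  have [b' [hb' ->]] := liftA (leq_maxr N M) hb.
  by exists (maxn N M), (a' + b'); split; [exact: AD | rewrite scalerDr].
- move=> i _.
  have [N hN] := pow_unb hlam (abs (c i)).
  exists N, ((lam^-1 ^+ N * c i) *: v i); split.
    apply: AZ => //; rewrite absM abs_lamV.
    have hp : 0 < abs lam ^+ N by apply: exprn_gt0; apply: lt_trans ltr01 hlam.
    by rewrite mulrC ler_pdivrMr // mul1r; apply: ltW; apply: hN.
  by rewrite scalerA mulrA lamVK mul1r.
Qed.

Lemma baire : banach_subspace nrm (lspan A) ->
  exists N c r, lspan A c /\ 0 < r /\ forall z, lspan A z -> nrm (z - c) < r ->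
    forall d, 0 < d -> exists a, A a /\ nrm (z - lam ^+ N *: a) < d.
Proof.
move=> hban; case: (pselect (exists N c r, lspan A c /\ 0 < r /\ forall z, lspan A z -> nrm (z - c) < r ->
    forall d, 0 < d -> exists a, A a /\ nrm (z - lam ^+ N *: a) < d)) => // hn.
exfalso.
pose P (p : nat * E * R) (q : E * R) := lspan A p.1.2 -> 0 < p.2 ->
  [/\ lspan A q.1, nrm (q.1 - p.1.2) < p.2, 0 < q.2 &
      forall a, A a -> q.2 <= nrm (q.1 - lam ^+ p.1.1 *: a)].
have hP : forall p, exists q, P p q.
  move=> [[N c] r]; rewrite /P /=.
  case: (pselect (exists q : E * R, lspan A c -> 0 < r ->
    [/\ lspan A q.1, nrm (q.1 - c) < r, 0 < q.2 &
      forall a, A a -> q.2 <= nrm (q.1 - lam ^+ N *: a)])) => // hno.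
  exfalso; apply: hn; exists N, c, r.
  have hc : lspan A c.
    case: (pselect (lspan A c)) => // hc; exfalso; apply: hno; exists (0, 0) => //.
  have hr : 0 < r.
    case: (pselect (0 < r)) => // hr; exfalso; apply: hno; exists (0, 0) => //.
  split => //; split => // z hz hzc d hd.
  case: (pselect (exists a, A a /\ nrm (z - lam ^+ N *: a) < d)) => // hno2.
  exfalso; apply: hno; exists (z, d) => _ _; split => // a ha.
  rewrite leNgt; apply/negP => hlt; apply: hno2; by exists a.
have [f hf] := choice hP.
pose s := fix s (k : nat) : E * R := match k with 0%N => (0, 1) | k'.+1 =>
   let q := f (k', (s k').1, (s k').2) in (q.1, Num.min ((s k').2 / 2) (q.2 / 2)) end.
have hinv : forall k, lspan A (s k).1 /\ 0 < (s k).2.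
  elim=> [|k [h1 h2]] /=; first by split; [exact: lspan0 | exact: ltr01].
  have [h3 h4 h5 h6] := hf (k, (s k).1, (s k).2) h1 h2.
  split => //; rewrite lt_min; apply/andP; split; apply: divr_gt0 => //; exact: ltr0Sn.
have hstep : forall k, nrm ((s k.+1).1 - (s k).1) < (s k).2 /\ (s k.+1).2 <= (s k).2 / 2 /\
   (s k.+1).2 <= (f (k, (s k).1, (s k).2)).2 / 2 /\
   forall a, A a -> (f (k, (s k).1, (s k).2)).2 <= nrm ((s k.+1).1 - lam ^+ k *: a).
  move=> k; have [h1 h2] := hinv k.
  have [h3 h4 h5 h6] := hf (k, (s k).1, (s k).2) h1 h2.
  by split => //; split; [by rewrite ge_min lexx | split; [by rewrite ge_min lexx orbT | ]].
have hrad : forall k, (s k).2 <= (2 ^+ k)^-1.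
  elim=> [|k IH] /=; first by rewrite expr0 invr1 lexx.
  have [_ [h _]] := hstep k; apply: le_trans h _.
  rewrite exprS invfM [X in _ <= X]mulrC; apply: ler_wpM2r => //; by rewrite invr_ge0 ler0n.
have hmono : forall k m, (k <= m)%N -> (s m).2 <= (s k).2.
  move=> k; elim=> [|m IH] hkm; first by move: hkm; rewrite leqn0 => /eqP ->.
  case: (ltngtP k m.+1) hkm => // [hlt _|-> _]; last exact: lexx.
  have [_ [h _]] := hstep m; have hm := (hinv m).2.
  apply: le_trans h _; apply: le_trans (IH hlt); rewrite ler_pdivrMr; last by lra.
  rewrite -subr_ge0; have -> : (s m).2 * 2 - (s m).2 = (s m).2 by ring.
  exact: ltW.
have hnest : forall k m, (k <= m)%N -> nrm ((s m).1 - (s k).1) < (s k).2.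
  move=> k; elim=> [|m IH] hkm.
    by move: hkm; rewrite leqn0 => /eqP ->; rewrite subrr nrm0; exact: (hinv 0%N).2.
  case: (ltngtP k m.+1) hkm => // [hlt _|-> _]; last by rewrite subrr nrm0; exact: (hinv _).2.
  have -> : (s m.+1).1 - (s k).1 = ((s m.+1).1 - (s m).1) + ((s m).1 - (s k).1).
    by rewrite addrA subrK.
  apply: nrmD_lt; last exact: IH.
  apply: lt_le_trans (hstep m).1 _; exact: hmono.
have hcauchy : forall e : R, 0 < e -> exists N : nat, forall m n : nat,
    (N <= m)%N -> (N <= n)%N -> nrm ((s m).1 - (s n).1) < e.
  move=> e he; have [N hN] := geo_small two_gt1 he; exists N => m n hm hn2.
  have -> : (s m).1 - (s n).1 = ((s m).1 - (s N).1) - ((s n).1 - (s N).1).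
    by rewrite opprB addrA subrK.
  have hb : (s N).2 < e by apply: le_lt_trans (hrad N) (hN N (leqnn N)).
  by apply: nrmB_lt; apply: lt_trans hb; apply: hnest.
have [l [hl hlim]] := hban (fun k => (s k).1) (fun k => (hinv k).1) hcauchy.
have [K0 [a [ha hla]]] := cover hl.
have [_ hr1] := hinv K0.+1.
have [N0 hN0] := hlim _ hr1.
set n := maxn N0 K0.+1.
have h1 := hN0 n (leq_maxl _ _).
have h2 := hnest K0.+1 n (leq_maxr _ _).
have h3 : nrm (l - (s K0.+1).1) < (s K0.+1).2.
  have -> : l - (s K0.+1).1 = ((s n).1 - (s K0.+1).1) - ((s n).1 - l).
    by rewrite opprB [RHS]addrC [RHS]addrA subrK.
  exact: nrmB_lt.
have [_ [_ [h4 h5]]] := hstep K0.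
have h6 := h5 a ha; rewrite -hla nrmB in h6.
have hq := (hf (K0, (s K0).1, (s K0).2) (hinv K0).1 (hinv K0).2).
case: hq => _ _ hq0 _.
have : (f (K0, (s K0).1, (s K0).2)).2 < (f (K0, (s K0).1, (s K0).2)).2.
  apply: le_lt_trans h6 _; apply: lt_le_trans h3 _; apply: le_trans h4 _.
  rewrite ler_pdivrMr; last by lra.
  set y := (f _).2 in hq0 *; lra.
by rewrite ltxx.
Qed.

Lemma bern_down (h : R) n : 0 <= h -> h <= 1 -> 1 - n%:R * h <= (1 - h) ^+ n.
Proof.
move=> h0 h1; elim: n => [|n IH]; first by rewrite mul0r subr0 expr0.
rewrite exprS -natr1.
have ht : 0 <= (n%:R : R) by apply: ler0n.
have h2 : (1 - h) * (1 - n%:R * h) <= (1 - h) * (1 - h) ^+ n by apply: ler_wpM2l => //; lra.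
apply: le_trans h2.
set t := n%:R in ht *.
have h3 : 0 <= t * h * h by apply: mulr_ge0 => //; apply: mulr_ge0.
have -> : (1 - h) * (1 - t * h) = 1 - (t + 1) * h + t * h * h by ring.
lra.
Qed.

Lemma choose_t n : exists t : R, [/\ 0 < t, t < 1 & 2^-1 <= t ^+ n].
Proof.
have hn : 0 < ((n.+1)%:R * 2 : R) by apply: mulr_gt0; [exact: ltr0Sn | lra].
set h := ((n.+1)%:R * 2 : R)^-1.
have hh : 0 < h by rewrite invr_gt0.
have he : h * ((n.+1)%:R * 2) = 1 by rewrite mulVf // gt_eqF.
have ht : 0 <= (n%:R : R) by apply: ler0n.
rewrite -natr1 in he.
have hh1 : h <= 1 by nra.
exists (1 - h); split; [nra | lra | ].
apply: le_trans (bern_down n (ltW hh) hh1); nra.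
Qed.

Lemma approx : banach_subspace nrm (lspan A) -> local_compactoid abs nrm A ->
  exists r T, 0 < r /\ (forall y, y \in T -> lspan A y) /\
   forall w, lspan A w -> nrm w < r -> exists u y, nrm u < r / abs lam /\ spanS T y /\ w = u + y.
Proof.
move=> hban hcpt.
have [N [c [r [hc [hr hB]]]]] := baire hban.
set mu := lam ^+ N.
have hq : 0 < abs lam by apply: lt_trans ltr01 hlam.
have hmu : 0 < abs mu by rewrite /mu absX; apply: exprn_gt0.
have H5 : forall w, lspan A w -> nrm w < r -> forall d, 0 < d ->
    exists a, A a /\ nrm (w - mu *: a) < d.
  move=> w hw hwr d hd.
  have e1 : nrm (c + w - c) < r by rewrite addrC addKr.
  have e2 : nrm (c - c) < r by rewrite subrr nrm0.
  have [a1 [ha1 h1]] := hB (c + w) (lspanD hc hw) e1 d hd.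
  have [a2 [ha2 h2]] := hB c hc e2 d hd.
  exists (a1 - a2); split; first exact: AB.
  by rewrite scalerBr (rearr2 c); apply: nrmB_lt.
set eps := r / abs lam / 2.
have heps : 0 < eps by apply: divr_gt0; [exact: divr_gt0 | lra].
case: hcpt => _ hcov.
have [S [[s hs] hS]] := hcov (fun x => nrm x < eps / abs mu)
  (ex_intro _ (eps / abs mu) (conj (divr_gt0 heps hmu) (fun x hx => hx))).
have [b [heq [[C [hC hb]] _]]] := basis s.
have [t [ht0 ht1 htn]] := choose_t (size b).
pose X := fun w => lspan A w /\ nrm w < r.
have hF : forall x y be, lspan A x -> lspan A y -> lspan A (x - be *: y).
  by move=> x y be hx hy; apply: lspanB => //; apply: lspanZ.
have hX : forall w, X w -> exists u c, nrm u < eps /\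
    (forall i, (i < size b)%N -> abs (c i) <= C * Num.max r eps) /\ w = u + comb b c.
  move=> w [hw hwr].
  have [a [ha haw]] := H5 w hw hwr eps heps.
  have [u [y [hu [hy hay]]]] := hS a ha.
  have hys : spanS s y by apply: (lspan_spanS (X := S)) hy => x hx; apply/hs.
  have [cy hcy] := (heq y).1 hys.
  have hv : nrm ((w - mu *: a) + mu *: u) < eps.
    apply: nrmD_lt => //; rewrite nrmZ -ltr_pdivlMl //; by rewrite mulrC.
  have hw' : w = ((w - mu *: a) + mu *: u) + comb b (fun i => mu * cy i).
    have hcz : comb b (fun i => mu * cy i) = mu *: y by rewrite hcy combZ.
    rewrite hcz hay scalerDr; exact: rearr3.
  exists ((w - mu *: a) + mu *: u), (fun i => mu * cy i); split => //; split => // i hi.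
  apply: le_trans (hb (fun i => mu * cy i) i hi) _; apply: ler_wpM2l; first exact: ltW.
  have -> : comb b (fun i => mu * cy i) = w - ((w - mu *: a) + mu *: u).
    by rewrite {1}hw' [RHS]addrC addKr.
  apply: nrmD_le; rewrite ?nrmN le_max; apply/orP; [left | right]; exact: ltW.
have [T [hT hT2]] := transfer hF ht0 ht1 (X := X) (fun w hw => hw.1) hX.
exists r, T; split => //; split => // w hw hwr.
have [u [y [hu [hy hwe]]]] := hT2 w (conj hw hwr).
exists u, y; split => //; apply: lt_le_trans hu _.
have htp : 0 < t ^+ size b by apply: exprn_gt0.
have h2 : (t ^+ size b)^-1 <= 2.
  by rewrite -[2]invrK lef_pV2 ?posrE ?invr_gt0 //; lra.
have -> : r / abs lam = eps * 2 by rewrite /eps mulfVK //; lra.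
by apply: ler_wpM2l => //; exact: ltW.
Qed.

Lemma final : banach_subspace nrm (lspan A) -> local_compactoid abs nrm A ->
  finite_dim (lspan A).
Proof.
move=> hban hcpt.
have [r [T [hr [hT hP]]]] := approx hban hcpt.
have hq : 0 < abs lam by apply: lt_trans ltr01 hlam.
have hqk : forall k, 0 < abs lam ^+ k by move=> k; apply: exprn_gt0.
have hiter : forall k w, lspan A w -> nrm w < r ->
    exists y, spanS T y /\ nrm (w - y) < r * (abs lam ^+ k)^-1.
  elim=> [|k IH] w hw hwr.
    by exists 0; split; [exact: spanS0 | rewrite subr0 expr0 invr1 mulr1].
  have [y [hy hwy]] := IH w hw hwr.
  set z := w - y.
  have hz : lspan A z by apply: lspanB => //; apply: spanS_lspan2 hy.
  have hz' : nrm (lam ^+ k *: z) < r.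
    by rewrite nrmZ absX mulrC -ltr_pdivlMr.
  have [u [y' [hu [hy' hze]]]] := hP _ (lspanZ _ hz) hz'.
  exists (y + lam^-1 ^+ k *: y'); split.
    by apply: spanSD => //; apply: spanSZ.
  have -> : w - (y + lam^-1 ^+ k *: y') = lam^-1 ^+ k *: u.
    have e1 : z = lam^-1 ^+ k *: (lam ^+ k *: z) by rewrite scalerA mulrC lamVK scale1r.
    by rewrite opprD addrA -/z e1 hze scalerDr addrK.
  rewrite nrmZ abs_lamV exprS invfM.
  have ha : 0 < (abs lam ^+ k)^-1 by rewrite invr_gt0.
  by rewrite mulrC mulrA ltr_pM2r.
have [bT [heqT [_ hclT]]] := basis T.
have hball : forall w, lspan A w -> nrm w < r -> spanS T w.
  move=> w hw hwr; apply/heqT; apply: hclT => d hd.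
  have [k hk] := geo_small hlam (divr_gt0 hd hr).
  have [y [hy hwy]] := hiter k w hw hwr.
  exists y; split; first exact/heqT.
  apply: lt_trans hwy _; rewrite mulrC -ltr_pdivlMr //; exact: hk.
have hall : forall w, lspan A w -> spanS T w.
  move=> w hw; have [k hk] := pow_unb hlam (nrm w / r).
  have hk' := hk k (leqnn k).
  have h1 : lspan A (lam^-1 ^+ k *: w) by apply: lspanZ.
  have h2 : nrm (lam^-1 ^+ k *: w) < r.
    rewrite nrmZ abs_lamV mulrC ltr_pdivrMr //; by rewrite mulrC -ltr_pdivrMr.
  have h3 := hball _ h1 h2.
  have -> : w = lam ^+ k *: (lam^-1 ^+ k *: w) by rewrite scalerA lamVK scale1r.
  exact: spanSZ.
exists (fun y => y \in T); split; first by exists T.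
move=> x hx; apply: (@spanS_lspan _ _ (fun y => y \in T) T (fun y hy => hy)); exact: hall.
Qed.

End Main.

Unset Implicit Arguments.
Theorem mainTheorem11 (R : realType) (K : fieldType) (abs : K -> R)
  (E : lmodType K) (nrm : E -> R) (A : E -> Prop) :
  nonarch_abs abs -> nontrivial_abs abs -> complete_abs abs ->
  nonarch_norm abs nrm ->
  local_compactoid abs nrm A ->
  ~ finite_dim (lspan A) ->
  ~ banach_subspace nrm (lspan A).
Proof.
move=> habs hnt hcomp hnrm hcpt hnf hban.
have [lam hlam] := exists_big habs hnt.
apply: hnf; apply: (final habs hnrm hcomp hcpt.1 hlam hban hcpt).
Qed.
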